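(* (i) For all contexts $\Gamma,\Delta$: if $\Gamma\approx_\alpha\Delta$ and $\Gamma\ \mathrm{ok}$ then $\Delta\ \mathrm{ok}$. (ii) For all contexts $\Gamma,\Delta$ and terms $M,N,A$: if $\Gamma\approx_\alpha\Delta$, $M\sim_\alpha N$ and $\Gamma\vdash M:A$, then $\Delta\vdash N:A$.
   Context: Let $\mathcal V$ (the variables) be a type with decidable equality, equipped with functions $\mathrm{encode}:\mathcal V\to\mathbb N$ and $\mathrm{decode}:\mathbb N\to\mathcal V$ such that $\mathrm{encode}(\mathrm{decode}\,n)=n$ for all $n$. Let $\mathcal C$ (the constants) be any type. Terms $\Lambda$ are generated by: $c\,k$ ($k\in\mathcal C$), $v\,x$ ($x\in\mathcal V$), $\lambda[x:A]M$, $\Pi[x:A]B$ and $M\cdot N$; in $\lambda[x:A]M$ and $\Pi[x:A]B$ the name $x$ binds in $M$ (resp. $B$) but not in $A$. Terms are raw first-order syntax (not identified up to renaming of bound variables) and $\equiv$ denotes syntactic identity. The list of free variables is $\mathrm{fv}(c\,k)=[\,]$, $\mathrm{fv}(v\,x)=[x]$, $\mathrm{fv}(\lambda[x:A]M)=\mathrm{fv}\,A\mathbin{+\!\!+}(\mathrm{fv}\,M-x)$, $\mathrm{fv}(\Pi[x:A]B)=\mathrm{fv}\,A\mathbin{+\!\!+}(\mathrm{fv}\,B-x)$, $\mathrm{fv}(M\cdot N)=\mathrm{fv}\,M\mathbin{+\!\!+}\mathrm{fv}\,N$, where $\mathbin{+\!\!+}$ is list concatenation and $xs-x$ deletes every occurrence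 of $x$ from $xs$. Fix a function $\chi':\mathrm{List}\,\mathbb N\to\mathbb N$ with $\chi'(ns)\notin ns$ for every list $ns$, and put $X'(xs)=\mathrm{decode}(\chi'(\mathrm{map}\ \mathrm{encode}\ xs))$. A substitution is any function $\sigma:\mathcal V\to\Lambda$; $\iota=v$ is the identity substitution; $(\sigma,x:=N)(y)=N$ if $y=x$ and $\sigma\,y$ otherwise. For a substitution $\sigma$ and a list $xs$ of variables, $X(\sigma,xs)=X'(\text{concatenation of the lists }\mathrm{fv}(\sigma\,y)\text{ for }y\in xs)$. The action $M\bullet\sigma$ is defined by structural recursion: $c\,k\bullet\sigma=c\,k$; $v\,x\bullet\sigma=\sigma\,x$; $(M\cdot N)\bullet\sigma=(M\bullet\sigma)\cdot(N\bullet\sigma)$; $(\lambda[x:A]M)\bullet\sigma=\lambda[y:A\bullet\sigma](M\bullet(\sigma,x:=v\,y))$ with $y=X(\sigma,\mathrm{fv}\,M-x)$; $(\Pi[x:A]B)\bullet\sigma=\Pi[y:A\bullet\sigma](B\bullet(\sigma,x:=v\,y))$ with $y=X(\sigma,\mathrm{fv}\,B-x)$. Unary substitution is $M[x:=N]=M\bullet(\iota,x:=N)$. $\alpha$-conversion $\sim_\alpha$ is the inductively defined relation with rules: $c\,k\sim_\alpha c\,k$; $v\,x\sim_\alpha v\,x$; $M\cdot N\sim_\alpha M'\cdot N'$ if $M\sim_\alpha M'$ and $N\sim_\alpha N'$; $\lambda[x:A]M\sim_\alpha\lambda[x':A']M'$ if $A\sim_\alpha A'$ and there is a variable $y$ with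 $y\notin\mathrm{fv}\,M-x$, $y\notin\mathrm{fv}\,M'-x'$ and $M[x:=v\,y]\equiv M'[x':=v\,y]$; and the same rule with $\Pi$ in place of $\lambda$. $\beta$-contraction is $(\lambda[x:A]M)\cdot N\ \triangleright_\beta\ M[x:=N]$. One-step $\beta$-reduction $\to_\beta$ is its contextual closure, inductively: $M\to_\beta N$ if $M\triangleright_\beta N$; $\lambda[x:A]M\to_\beta\lambda[x:A]M'$ and $\Pi[x:A]M\to_\beta\Pi[x:A]M'$ if $M\to_\beta M'$; $\lambda[x:A]M\to_\beta\lambda[x:A']M$ and $\Pi[x:A]M\to_\beta\Pi[x:A']M$ if $A\to_\beta A'$; $M\cdot P\to_\beta N\cdot P$ and $P\cdot M\to_\beta P\cdot N$ if $M\to_\beta N$. $\beta$-conversion $\simeq_\beta$ is the equivalence (reflexive–symmetric–transitive) closure of $\sim_\alpha\cup\to_\beta$. Pure Type System: fix a binary relation $\mathcal A\subseteq\mathcal C\times\mathcal C$ (axioms) and a ternary relation $\mathcal R\subseteq\mathcal C\times\mathcal C\times\mathcal C$ (rules). A context is a finite list of pairs $(x,A)$ with $x\in\mathcal V$, $A\in\Lambda$; $\Gamma,x:A$ denotes the list $(x,A)::\Gamma$; $\mathrm{dom}\,\Gamma$ is the list of first components; $(x,A)\in\Gamma$ is list membership. The judgments $\Gamma\ \mathrm{ok}$ and $\Gamma\vdash M:A$ are defined mutually inductively by: (nil) $[\,]\ \mathrm{ok}$; (cons) if $\Gamma\ \mathrm{ok}$, $\Gamma\vdash A:c\,s$ and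 $x\notin\mathrm{dom}\,\Gamma$ then $\Gamma,x:A\ \mathrm{ok}$; (sort) if $\Gamma\ \mathrm{ok}$ and $\mathcal A\,s_1\,s_2$ then $\Gamma\vdash c\,s_1:c\,s_2$; (var) if $\Gamma\ \mathrm{ok}$ and $(x,A)\in\Gamma$ then $\Gamma\vdash v\,x:A$; (prod) if $\mathcal R\,s_1\,s_2\,s_3$, $\Gamma\vdash A:c\,s_1$ and for every $y\notin\mathrm{dom}\,\Gamma$, $\Gamma,y:A\vdash B[x:=v\,y]:c\,s_2$, then $\Gamma\vdash\Pi[x:A]B:c\,s_3$; (abs) if $\mathcal R\,s_1\,s_2\,s_3$, $\Gamma\vdash A:c\,s_1$, for every $z\notin\mathrm{dom}\,\Gamma$, $\Gamma,z:A\vdash B[y:=v\,z]:c\,s_2$, and for every $z\notin\mathrm{dom}\,\Gamma$, $\Gamma,z:A\vdash M[x:=v\,z]:B[y:=v\,z]$, then $\Gamma\vdash\lambda[x:A]M:\Pi[y:A]B$; (app) if $\Gamma\vdash M:\Pi[x:A]B$, $\Gamma\vdash N:A$ and $\Gamma\vdash B[x:=N]:c\,s$ for some $s$, then $\Gamma\vdash M\cdot N:B[x:=N]$; (conv) if $\Gamma\vdash M:A$, $A\simeq_\beta B$ and $\Gamma\vdash B:c\,s$ for some $s$, then $\Gamma\vdash M:B$. (The premises quantified over all fresh names in (prod) and (abs) are infinitely branching.) $\Gamma\approx_\alpha\Delta$ means: $\Gamma$ and $\Delta$ have the same length and, position by position, the entries $(x,A)$ of $\Gamma$ and $(y,B)$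 of $\Delta$ satisfy $x=y$ and $A\sim_\alpha B$. *)

(* Defs.v *)
From Stdlib Require Import List Relations.
Import ListNotations.

Section PTS.
Context {V C : Type}.
Variable (V_eq_dec : forall x y : V, {x = y} + {x <> y}).
Variables (encode : V -> nat) (decode : nat -> V) (chi' : list nat -> nat).
Variables (Ax : C -> C -> Prop) (Rl : C -> C -> C -> Prop).

Inductive term : Type :=
| tc : C -> term
| tv : V -> term
| tlam : V -> term -> term -> term
| tpi : V -> term -> term -> term
| tapp : term -> term -> term.

Definition lremove (xs : list V) (x : V) : list V :=
  filter (fun y => if V_eq_dec y x then false else true) xs.

Fixpoint fv (M : term) : list V :=
  match M with
  | tc _ => []
  | tv x => [x]
  | tlam x A M => fv A ++ lremove (fv M) x
  | tpi x A B => fv A ++ lremove (fv B) x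
  | tapp M N => fv M ++ fv N
  end.

Definition Xp (xs : list V) : V := decode (chi' (map encode xs)).

Definition subst_t := V -> term.
Definition iota : subst_t := tv.
Definition upd (s : subst_t) (x : V) (N : term) : subst_t :=
  fun y => if V_eq_dec y x then N else s y.

Definition Xs (s : subst_t) (xs : list V) : V :=
  Xp (flat_map (fun y => fv (s y)) xs).

Fixpoint act (M : term) (s : subst_t) : term :=
  match M with
  | tc k => tc k
  | tv x => s x
  | tapp M N => tapp (act M s) (act N s)
  | tlam x A M =>
      let y := Xs s (lremove (fv M) x) in
      tlam y (act A s) (act M (upd s x (tv y)))
  | tpi x A B =>
      let y := Xs s (lremove (fv B) x) in
      tpi y (act A s) (act B (upd s x (tv y)))
  end.

Definition usubst (M : term) (x : V) (N : term) : term := act M (upd iota x N).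

Inductive alpha : term -> term -> Prop :=
| alpha_c k : alpha (tc k) (tc k)
| alpha_v x : alpha (tv x) (tv x)
| alpha_app M N M' N' : alpha M M' -> alpha N N' -> alpha (tapp M N) (tapp M' N')
| alpha_lam x A M x' A' M' y :
    alpha A A' -> ~ In y (lremove (fv M) x) -> ~ In y (lremove (fv M') x') ->
    usubst M x (tv y) = usubst M' x' (tv y) ->
    alpha (tlam x A M) (tlam x' A' M')
| alpha_pi x A M x' A' M' y :
    alpha A A' -> ~ In y (lremove (fv M) x) -> ~ In y (lremove (fv M') x') ->
    usubst M x (tv y) = usubst M' x' (tv y) ->
    alpha (tpi x A M) (tpi x' A' M').

Inductive beta_contr : term -> term -> Prop :=
| bc x A M N : beta_contr (tapp (tlam x A M) N) (usubst M x N).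

Inductive beta1 : term -> term -> Prop :=
| b1_contr M N : beta_contr M N -> beta1 M N
| b1_lam_body x A M M' : beta1 M M' -> beta1 (tlam x A M) (tlam x A M')
| b1_pi_body x A M M' : beta1 M M' -> beta1 (tpi x A M) (tpi x A M')
| b1_lam_ty x A A' M : beta1 A A' -> beta1 (tlam x A M) (tlam x A' M)
| b1_pi_ty x A A' M : beta1 A A' -> beta1 (tpi x A M) (tpi x A' M)
| b1_appl M N P : beta1 M N -> beta1 (tapp M P) (tapp N P)
| b1_appr M N P : beta1 M N -> beta1 (tapp P M) (tapp P N).

Definition beta_conv : relation term :=
  clos_refl_sym_trans term (fun M N => alpha M N \/ beta1 M N).

Definition ctx := list (V * term).
Definition dom (G : ctx) : list V := map fst G.

Inductive ctx_ok : ctx -> Prop :=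
| ok_nil : ctx_ok []
| ok_cons G x A s : ctx_ok G -> typing G A (tc s) -> ~ In x (dom G) ->
    ctx_ok ((x, A) :: G)
with typing : ctx -> term -> term -> Prop :=
| ty_sort G s1 s2 : ctx_ok G -> Ax s1 s2 -> typing G (tc s1) (tc s2)
| ty_var G x A : ctx_ok G -> In (x, A) G -> typing G (tv x) A
| ty_prod G x A B s1 s2 s3 : Rl s1 s2 s3 -> typing G A (tc s1) ->
    (forall y, ~ In y (dom G) -> typing ((y, A) :: G) (usubst B x (tv y)) (tc s2)) ->
    typing G (tpi x A B) (tc s3)
| ty_abs G x y A B M s1 s2 s3 : Rl s1 s2 s3 -> typing G A (tc s1) ->
    (forall z, ~ In z (dom G) -> typing ((z, A) :: G) (usubst B y (tv z)) (tc s2)) ->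
    (forall z, ~ In z (dom G) ->
       typing ((z, A) :: G) (usubst M x (tv z)) (usubst B y (tv z))) ->
    typing G (tlam x A M) (tpi y A B)
| ty_app G M N x A B s : typing G M (tpi x A B) -> typing G N A ->
    typing G (usubst B x N) (tc s) -> typing G (tapp M N) (usubst B x N)
| ty_conv G M A B s : typing G M A -> beta_conv A B -> typing G B (tc s) ->
    typing G M B.

Definition ctx_alpha (G D : ctx) : Prop :=
  Forall2 (fun p q => fst p = fst q /\ alpha (snd p) (snd q)) G D.

End PTS.

(* Main.v *)
Require Import Defs.
From Stdlib Require Import List Relations.
Import ListNotations.

Scheme ok_mut := Minimality for ctx_ok Sort Prop
  with ty_mut := Minimality for typing Sort Prop.
Combined Scheme both_mut from ok_mut, ty_mut.

Section Proofs.
Context {V C : Type}.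
Variable (V_eq_dec : forall x y : V, {x = y} + {x <> y}).
Variables (encode : V -> nat) (decode : nat -> V) (chi' : list nat -> nat).
Hypothesis Hdec : forall n, encode (decode n) = n.
Hypothesis Hchi : forall ns, ~ In (chi' ns) ns.
Variables (Ax : C -> C -> Prop) (Rl : C -> C -> C -> Prop).

Local Notation term := (@term V C).
Local Notation ctx := (@Defs.ctx V C).
Local Notation dom := (@Defs.dom V C).
Local Notation fv := (@fv V C V_eq_dec).
Local Notation lremove := (@lremove V V_eq_dec).
Local Notation act := (@act V C V_eq_dec encode decode chi').
Local Notation Xs := (@Xs V C V_eq_dec encode decode chi').
Local Notation Xp := (@Xp V encode decode chi').
Local Notation upd := (@upd V C V_eq_dec).
Local Notation usubst := (@usubst V C V_eq_dec encode decode chi').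
Local Notation alpha := (@alpha V C V_eq_dec encode decode chi').
Local Notation iota := (@iota V C).
Local Notation typing := (@typing V C V_eq_dec encode decode chi' Ax Rl).
Local Notation ctx_ok := (@ctx_ok V C V_eq_dec encode decode chi' Ax Rl).
Local Notation ctx_alpha := (@ctx_alpha V C V_eq_dec encode decode chi').
Local Notation beta_conv := (@beta_conv V C V_eq_dec encode decode chi').

Lemma Xp_fresh : forall xs, ~ In (Xp xs) xs.
Proof.
  intros xs H. apply (Hchi (map encode xs)). unfold Xp in H.
  rewrite <- (Hdec (chi' (map encode xs))). apply in_map. exact H.
Qed.

Lemma Xs_fresh : forall (s : V -> term) l u, In u l -> ~ In (Xs s l) (fv (s u)).
Proof.
  intros s l u Hu H. unfold Defs.Xs in H. eapply Xp_fresh. apply in_flat_map.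
  exists u. split; [exact Hu | exact H].
Qed.

Lemma lremove_In : forall l x y, In y (lremove l x) <-> In y l /\ y <> x.
Proof.
  intros. unfold Defs.lremove. rewrite filter_In.
  destruct (V_eq_dec y x); intuition congruence.
Qed.

Lemma lremove_app : forall l1 l2 x, lremove (l1 ++ l2) x = lremove l1 x ++ lremove l2 x.
Proof. intros. unfold Defs.lremove. apply filter_app. Qed.

Lemma lremove_notin : forall l y, ~ In y l -> lremove l y = l.
Proof.
  induction l; intros y H; simpl; auto.
  destruct (V_eq_dec a y). subst; simpl in H; tauto.
  f_equal. apply IHl. simpl in H; tauto.
Qed.

Lemma flat_map_ext_in : forall (A B : Type) (f g : A -> list B) l,
  (forall u, In u l -> f u = g u) -> flat_map f l = flat_map g l.
Proof.
  induction l; intros H; simpl; auto. rewrite H by (simpl; auto).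
  rewrite IHl; auto. intros; apply H; simpl; auto.
Qed.

Lemma flat_map_assoc : forall (A B D : Type) (f : A -> list B) (g : B -> list D) l,
  flat_map g (flat_map f l) = flat_map (fun u => flat_map g (f u)) l.
Proof.
  induction l; simpl; auto. rewrite flat_map_app, IHl. reflexivity.
Qed.

Lemma act_ext : forall M s s', (forall u, In u (fv M) -> s u = s' u) -> act M s = act M s'.
Proof.
  induction M; intros s s' H; simpl in *; auto.
  - rewrite IHM1 with (s' := s') by (intros; apply H; apply in_or_app; auto).
    assert (E : Xs s (lremove (fv M2) v) = Xs s' (lremove (fv M2) v)).
    { unfold Defs.Xs. f_equal. apply flat_map_ext_in. intros u Hu.
      rewrite H; auto. apply in_or_app; auto. }
    rewrite E. f_equal. apply IHM2. intros u Hu. unfold Defs.upd.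
    destruct (V_eq_dec u v); auto. apply H. apply in_or_app. right.
    apply lremove_In; auto.
  - rewrite IHM1 with (s' := s') by (intros; apply H; apply in_or_app; auto).
    assert (E : Xs s (lremove (fv M2) v) = Xs s' (lremove (fv M2) v)).
    { unfold Defs.Xs. f_equal. apply flat_map_ext_in. intros u Hu.
      rewrite H; auto. apply in_or_app; auto. }
    rewrite E. f_equal. apply IHM2. intros u Hu. unfold Defs.upd.
    destruct (V_eq_dec u v); auto. apply H. apply in_or_app. right.
    apply lremove_In; auto.
  - rewrite IHM1 with (s' := s'), IHM2 with (s' := s'); auto;
    intros; apply H; apply in_or_app; auto.
Qed.

Lemma lremove_flat_map : forall (s : V -> term) l x y,
  (forall u, In u l -> u <> x -> ~ In y (fv (s u))) ->
  lremove (flat_map (fun u => fv (upd s x (tv y) u)) l) y =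
  flat_map (fun u => fv (s u)) (lremove l x).
Proof.
  induction l; intros x y H; simpl; auto.
  rewrite lremove_app. unfold Defs.upd at 1.
  destruct (V_eq_dec a x).
  - simpl. destruct (V_eq_dec y y); [|congruence]. simpl.
    apply IHl. intros; apply H; simpl; auto.
  - simpl. rewrite lremove_notin by (apply H; simpl; auto).
    rewrite IHl by (intros; apply H; simpl; auto). reflexivity.
Qed.

Lemma fresh_body : forall (s : V -> term) M x u,
  In u M -> u <> x -> ~ In (Xs s (lremove M x)) (fv (s u)).
Proof.
  intros. apply Xs_fresh. apply lremove_In; auto.
Qed.

Lemma fv_act : forall M s, fv (act M s) = flat_map (fun u => fv (s u)) (fv M).
Proof.
  induction M; intros s; simpl; auto.
  - rewrite app_nil_r; auto.
  - rewrite flat_map_app, IHM1, IHM2, lremove_flat_map; auto.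
    intros; apply fresh_body; auto.
  - rewrite flat_map_app, IHM1, IHM2, lremove_flat_map; auto.
    intros; apply fresh_body; auto.
  - rewrite flat_map_app, IHM1, IHM2; auto.
Qed.

Lemma act_comp : forall M s t, act (act M s) t = act M (fun u => act (s u) t).
Proof.
  induction M; intros s t; simpl; auto.
  - rewrite IHM1. set (y := Xs s (lremove (fv M2) v)).
    assert (E : Xs t (lremove (fv (act M2 (upd s v (tv y)))) y)
              = Xs (fun u => act (s u) t) (lremove (fv M2) v)).
    { rewrite fv_act, lremove_flat_map by (intros; apply fresh_body; auto).
      unfold Defs.Xs. f_equal. rewrite flat_map_assoc.
      apply flat_map_ext_in. intros. rewrite fv_act. reflexivity. }
    rewrite E. f_equal. rewrite IHM2. apply act_ext. intros u Hu.
    unfold Defs.upd at 1 3. destruct (V_eq_dec u v).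
    + simpl. unfold Defs.upd. destruct (V_eq_dec y y); congruence.
    + apply act_ext. intros w Hw. unfold Defs.upd.
      destruct (V_eq_dec w y); auto. subst w.
      exfalso. exact (fresh_body s (fv M2) v u Hu n Hw).
  - rewrite IHM1. set (y := Xs s (lremove (fv M2) v)).
    assert (E : Xs t (lremove (fv (act M2 (upd s v (tv y)))) y)
              = Xs (fun u => act (s u) t) (lremove (fv M2) v)).
    { rewrite fv_act, lremove_flat_map by (intros; apply fresh_body; auto).
      unfold Defs.Xs. f_equal. rewrite flat_map_assoc.
      apply flat_map_ext_in. intros. rewrite fv_act. reflexivity. }
    rewrite E. f_equal. rewrite IHM2. apply act_ext. intros u Hu.
    unfold Defs.upd at 1 3. destruct (V_eq_dec u v).
    + simpl. unfold Defs.upd. destruct (V_eq_dec y y); congruence.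
    + apply act_ext. intros w Hw. unfold Defs.upd.
      destruct (V_eq_dec w y); auto. subst w.
      exfalso. exact (fresh_body s (fv M2) v u Hu n Hw).
  - rewrite IHM1, IHM2; auto.
Qed.

Lemma act_rename : forall M x y0 (s : V -> term) y,
  ~ In y0 (lremove (fv M) x) ->
  act M (upd s x (tv y)) = act (usubst M x (tv y0)) (upd s y0 (tv y)).
Proof.
  intros. unfold Defs.usubst. rewrite act_comp. apply act_ext. intros u Hu.
  unfold Defs.upd at 1 3. destruct (V_eq_dec u x).
  - subst u. simpl. unfold Defs.upd. destruct (V_eq_dec x x); [|congruence]. simpl. destruct (V_eq_dec y0 y0); congruence.
  - unfold Defs.upd. destruct (V_eq_dec u x); [congruence|]. unfold Defs.iota. simpl. destruct (V_eq_dec u y0); auto.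
    subst. exfalso. apply H. apply lremove_In; auto.
Qed.

Lemma lremove_rename : forall l x y0, ~ In y0 (lremove l x) ->
  lremove (flat_map (fun u => fv (upd iota x (tv y0) u)) l) y0 = lremove l x.
Proof.
  intros. rewrite lremove_flat_map.
  - clear H. induction (lremove l x) as [|a l0 IH]; simpl; auto. f_equal. exact IH.
  - intros u Hu Hux. unfold Defs.iota. simpl. intros [E|[]]. subst.
    apply H. apply lremove_In; auto.
Qed.

Lemma alpha_act : forall M N, alpha M N -> forall s, act M s = act N s.
Proof.
  induction 1; intros s; simpl; auto.
  - rewrite IHalpha1, IHalpha2; auto.
  - assert (E : lremove (fv M) x = lremove (fv M') x').
    { rewrite <- (lremove_rename (fv M) x y), <- (lremove_rename (fv M') x' y) by auto.
      rewrite <- !fv_act. unfold Defs.usubst in H2. rewrite H2. reflexivity. }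
    rewrite E, IHalpha. f_equal.
    rewrite (act_rename M x y), (act_rename M' x' y) by auto. rewrite H2. reflexivity.
  - assert (E : lremove (fv M) x = lremove (fv M') x').
    { rewrite <- (lremove_rename (fv M) x y), <- (lremove_rename (fv M') x' y) by auto.
      rewrite <- !fv_act. unfold Defs.usubst in H2. rewrite H2. reflexivity. }
    rewrite E, IHalpha. f_equal.
    rewrite (act_rename M x y), (act_rename M' x' y) by auto. rewrite H2. reflexivity.
Qed.

Lemma Xs_iota_fresh : forall l, ~ In (Xs iota l) l.
Proof.
  intros l H. eapply (Xs_fresh iota l); eauto. unfold Defs.iota. simpl. auto.
Qed.

Lemma act_alpha : forall M N, act M iota = act N iota -> alpha M N.
Proof.
  induction M; destruct N; simpl; unfold Defs.iota; intro H; try discriminate.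
  - injection H; intros; subst; constructor.
  - injection H; intros; subst; constructor.
  - injection H; intros Hb Ha Hy.
    apply alpha_lam with (y := Xs tv (lremove (fv M2) v)).
    + apply IHM1; auto.
    + apply Xs_iota_fresh.
    + rewrite Hy. apply Xs_iota_fresh.
    + unfold Defs.usubst. unfold Defs.iota. rewrite Hb. rewrite Hy. reflexivity.
  - injection H; intros Hb Ha Hy.
    apply alpha_pi with (y := Xs tv (lremove (fv M2) v)).
    + apply IHM1; auto.
    + apply Xs_iota_fresh.
    + rewrite Hy. apply Xs_iota_fresh.
    + unfold Defs.usubst. unfold Defs.iota. rewrite Hb. rewrite Hy. reflexivity.
  - injection H; intros. constructor; auto.
Qed.

Lemma alpha_refl : forall M, alpha M M.
Proof. intros; apply act_alpha; auto. Qed.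

Lemma alpha_sym : forall M N, alpha M N -> alpha N M.
Proof. intros. apply act_alpha. symmetry. apply alpha_act; auto. Qed.

Lemma alpha_body : forall B B' x x' y0,
  ~ In y0 (lremove (fv B) x) -> ~ In y0 (lremove (fv B') x') ->
  usubst B x (tv y0) = usubst B' x' (tv y0) ->
  forall z, usubst B x (tv z) = usubst B' x' (tv z).
Proof.
  intros. unfold Defs.usubst at 1 2.
  rewrite (act_rename B x y0), (act_rename B' x' y0) by auto. rewrite H1. reflexivity.
Qed.

Lemma alpha_usubst : forall B x N N', alpha N N' -> alpha (usubst B x N) (usubst B x N').
Proof.
  intros. apply act_alpha. unfold Defs.usubst. rewrite !act_comp.
  apply act_ext. intros u _. unfold Defs.upd. destruct (V_eq_dec u x); auto.
  apply alpha_act; auto.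
Qed.

Lemma conv_of_alpha : forall A B, alpha A B -> beta_conv A B.
Proof. intros. apply rst_step. left; auto. Qed.

Lemma dom_incl : forall (G G' : ctx) y, incl G G' -> ~ In y (dom G') -> ~ In y (dom G).
Proof.
  intros G G' y Hi H Hy. apply H. unfold Defs.dom in *. apply in_map_iff in Hy.
  destruct Hy as [p [E Hin]]. apply in_map_iff.
  exists p. split; auto.
Qed.

Lemma weaken : forall G M A, typing G M A -> forall G', incl G G' -> ctx_ok G' -> typing G' M A.
Proof.
  induction 1; intros G' Hi Hok.
  - constructor; auto.
  - constructor; auto.
  - apply ty_prod with s1 s2; auto. intros y Hy. apply H2.
    + eapply dom_incl; eauto.
    + apply incl_cons; [simpl; auto | apply incl_tl; auto].
    + econstructor; eauto.
  - apply ty_abs with s1 s2 s3; auto.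
    + intros z Hz. apply H2.
      * eapply dom_incl; eauto.
      * apply incl_cons; [simpl; auto | apply incl_tl; auto].
      * econstructor; eauto.
    + intros z Hz. apply H4.
      * eapply dom_incl; eauto.
      * apply incl_cons; [simpl; auto | apply incl_tl; auto].
      * econstructor; eauto.
  - eapply ty_app; eauto.
  - eapply ty_conv; eauto.
Qed.

Lemma ctx_alpha_dom : forall G D, ctx_alpha G D -> dom G = dom D.
Proof.
  induction 1; simpl; auto. destruct H. rewrite H, IHForall2. auto.
Qed.

Lemma ctx_alpha_In : forall G D x A, ctx_alpha G D -> In (x, A) G ->
  exists A', In (x, A') D /\ alpha A A'.
Proof.
  induction 1; simpl; intros Hin; [contradiction|].
  destruct Hin as [E|Hin].
  - subst. destruct y as [y B]. destruct H as [H1 H2]. simpl in *. subst.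
    exists B; auto.
  - destruct (IHForall2 Hin) as [A' [? ?]]. exists A'; auto.
Qed.

Lemma main_mut :
  (forall G, ctx_ok G -> forall D, ctx_alpha G D ->
     ctx_ok D /\ forall x A, In (x, A) G -> exists s, typing D A (tc s)) /\
  (forall G M A, typing G M A -> forall D N, ctx_alpha G D -> alpha M N -> typing D N A).
Proof.
  apply (both_mut V C V_eq_dec encode decode chi' Ax Rl
    (fun G => forall D, ctx_alpha G D ->
     ctx_ok D /\ forall x A, In (x, A) G -> exists s, typing D A (tc s))
    (fun G M A => forall D N, ctx_alpha G D -> alpha M N -> typing D N A)).
  - intros D HD. inversion HD. split; [constructor | intros ? ? []].
  - intros G x A s Hok IHok Hty IHty Hx D HD. inversion HD as [|p q G0 D0 Hpq HGD]; subst.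
    destruct q as [x' A']. destruct Hpq as [Hx' Ha]. simpl in Hx', Ha. subst x'.
    destruct (IHok D0 HGD) as [HokD Hent].
    assert (HokD' : ctx_ok ((x, A') :: D0)).
    { econstructor; eauto. rewrite <- (ctx_alpha_dom _ _ HGD); auto. }
    split; auto. intros z B [E|Hin].
    + injection E; intros; subst. exists s. eapply weaken.
      * apply IHty; eauto. apply alpha_refl.
      * apply incl_tl, incl_refl.
      * auto.
    + destruct (Hent z B Hin) as [s' Hs']. exists s'. eapply weaken; eauto.
      apply incl_tl, incl_refl.
  - intros G s1 s2 Hok IHok Hax D N HD Ha. inversion Ha; subst.
    constructor; auto. apply (IHok D HD).
  - intros G x A Hok IHok Hin D N HD Ha. inversion Ha; subst.
    destruct (IHok D HD) as [HokD Hent].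
    destruct (ctx_alpha_In _ _ _ _ HD Hin) as [A' [HinD HA]].
    destruct (Hent x A Hin) as [s Hs].
    apply ty_conv with A' s; auto.
    + constructor; auto.
    + apply rst_sym, conv_of_alpha; auto.
  - intros G x A B s1 s2 s3 Hr HA IHA HB IHB D N HD Ha.
    inversion Ha as [| | | |x1 A1 B1 x' A' M' y0 HAA Hf1 Hf2 Heq]; subst.
    apply ty_prod with s1 s2; auto.
    intros y Hy. apply (IHB y).
    + rewrite (ctx_alpha_dom _ _ HD); auto.
    + constructor; auto.
    + rewrite (alpha_body B M' x x' y0) with (z := y) by auto. apply alpha_refl.
  - intros G x y A B M s1 s2 s3 Hr HA IHA HB IHB HM IHM D N HD Ha.
    inversion Ha as [| | |x1 A1 B1 x' A' M' y0 HAA Hf1 Hf2 Heq|]; subst.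
    assert (Hdm : forall z, ~ In z (dom D) -> ~ In z (dom G)) by (intros; rewrite (ctx_alpha_dom _ _ HD); auto).
    apply ty_conv with (tpi y A' B) s3.
    + apply ty_abs with s1 s2 s3; auto.
      * intros z Hz. apply (IHB z (Hdm z Hz)). constructor; auto. apply alpha_refl.
      * intros z Hz. apply (IHM z (Hdm z Hz)). constructor; auto.
        rewrite (alpha_body M M' x x' y0) with (z := z) by auto. apply alpha_refl.
    + apply conv_of_alpha. apply act_alpha. simpl.
      rewrite (alpha_act A' A) by (apply alpha_sym; auto). reflexivity.
    + apply ty_prod with s1 s2; auto.
      * apply IHA; auto. apply alpha_refl.
      * intros z Hz. apply (IHB z (Hdm z Hz)). constructor; auto.
        -- split; simpl; auto. apply alpha_refl.
        -- apply alpha_refl.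
  - intros G M N x A B s HM IHM HN IHN HB IHB D N0 HD Ha.
    inversion Ha; subst.
    apply ty_conv with (usubst B x N') s.
    + apply ty_app with A s; auto. apply IHB; auto. apply alpha_usubst; auto.
    + apply conv_of_alpha, alpha_usubst, alpha_sym; auto.
    + apply IHB; auto. apply alpha_refl.
  - intros G M A B s HM IHM Hc HB IHB D N HD Ha.
    apply ty_conv with A s; auto. apply IHB; auto. apply alpha_refl.
Qed.

End Proofs.

Theorem mainTheorem14 (V C : Type) (V_eq_dec : forall x y : V, {x = y} + {x <> y})
  (encode : V -> nat) (decode : nat -> V)
  (Hdec : forall n, encode (decode n) = n)
  (chi' : list nat -> nat) (Hchi : forall ns, ~ In (chi' ns) ns)
  (Ax : C -> C -> Prop) (Rl : C -> C -> C -> Prop) :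
  (forall G D : @ctx V C,
     ctx_alpha V_eq_dec encode decode chi' G D ->
     ctx_ok V_eq_dec encode decode chi' Ax Rl G ->
     ctx_ok V_eq_dec encode decode chi' Ax Rl D) /\
  (forall (G D : @ctx V C) (M N A : @term V C),
     ctx_alpha V_eq_dec encode decode chi' G D ->
     alpha V_eq_dec encode decode chi' M N ->
     typing V_eq_dec encode decode chi' Ax Rl G M A ->
     typing V_eq_dec encode decode chi' Ax Rl D N A).
Proof.
  destruct (@main_mut V C V_eq_dec encode decode chi' Hdec Hchi Ax Rl) as [H1 H2].
  split.
  - intros G D HD Hok. apply (H1 G Hok D HD).
  - intros G D M N A HD Ha Ht. eapply H2; eauto.
Qed.
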